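(* Let a nondegenerate triangle with circumradius $R$ be circumscribed about an ellipse with linear eccentricity $c$ whose center coincides with the circumcenter of the triangle. Then the triangle is acute if and only if $R>c$, and it is obtuse if and only if $R<c$.
   Context: The linear eccentricity of an ellipse is half the distance between its foci. A triangle is circumscribed about a conic if each of its three sidelines is tangent to the conic. *)

(* Defs.v *)
From Stdlib Require Import Reals.
Open Scope R_scope.

Definition point := (R * R)%type.

Definition edist (P Q : point) : R :=
  sqrt ((fst P - fst Q)^2 + (snd P - snd Q)^2).

Definition dotv (V P Q : point) : R :=
  (fst P - fst V) * (fst Q - fst V) + (snd P - snd V) * (snd Q - snd V).

Definition noncollinear (A B C : point) : Prop :=
  (fst B - fst A) * (snd C - snd A) - (snd B - snd A) * (fst C - fst A) <> 0.

Definition on_line (P Q X : point) : Prop :=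
  (fst Q - fst P) * (snd X - snd P) - (snd Q - snd P) * (fst X - fst P) = 0.

(* Ellipse with foci F1, F2 and semi-major axis a (requires edist F1 F2 < 2a). *)
Definition is_ellipse (F1 F2 : point) (a : R) : Prop := edist F1 F2 < 2 * a.
Definition on_ellipse (F1 F2 : point) (a : R) (X : point) : Prop :=
  edist X F1 + edist X F2 = 2 * a.

Definition center (F1 F2 : point) : point :=
  ((fst F1 + fst F2) / 2, (snd F1 + snd F2) / 2).

Definition linear_eccentricity (F1 F2 : point) : R := edist F1 F2 / 2.

Definition tangent_line (P Q F1 F2 : point) (a : R) : Prop :=
  exists X, on_line P Q X /\ on_ellipse F1 F2 a X /\
    forall Y, on_line P Q Y -> on_ellipse F1 F2 a Y -> Y = X.

Definition circumscribed_about (A B C F1 F2 : point) (a : R) : Prop :=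
  tangent_line A B F1 F2 a /\ tangent_line B C F1 F2 a /\ tangent_line C A F1 F2 a.

Definition is_circumcenter (A B C O : point) : Prop :=
  edist O A = edist O B /\ edist O B = edist O C.

(* Angle at vertex V is acute/obtuse iff cos of the angle (sign of dot product) is >0 / <0. *)
Definition acute_triangle (A B C : point) : Prop :=
  0 < dotv A B C /\ 0 < dotv B C A /\ 0 < dotv C A B.
Definition obtuse_triangle (A B C : point) : Prop :=
  dotv A B C < 0 \/ dotv B C A < 0 \/ dotv C A B < 0.

(* Main.v *)
Require Import Defs.
From Stdlib Require Import Reals Lra Psatz.
Open Scope R_scope.

Lemma sqrt_le_l x y : 0 <= y -> x <= y * y -> sqrt x <= y.
Proof.
  intros Hy Hx. rewrite <- (sqrt_square y Hy).
  destruct (Rle_lt_dec 0 x).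
  - apply sqrt_le_1; nra.
  - rewrite (sqrt_neg_0 x) by lra. apply sqrt_pos.
Qed.

Lemma edist_nonneg P Q : 0 <= edist P Q.
Proof. apply sqrt_pos. Qed.

Lemma edist_sym P Q : edist P Q = edist Q P.
Proof. unfold edist. f_equal. ring. Qed.

Lemma edist_sq P Q : edist P Q * edist P Q = (fst P - fst Q)^2 + (snd P - snd Q)^2.
Proof. unfold edist. rewrite sqrt_sqrt; [reflexivity|]. apply Rplus_le_le_0_compat; apply pow2_ge_0. Qed.

Lemma edist_tri P Q S : edist P S <= edist P Q + edist Q S.
Proof.
  pose proof (edist_sq P Q) as H1. pose proof (edist_sq Q S) as H2.
  pose proof (edist_nonneg P Q). pose proof (edist_nonneg Q S).
  unfold edist at 1. apply sqrt_le_l; [lra|].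
  set (u1 := fst P - fst Q) in *. set (u2 := snd P - snd Q) in *.
  set (v1 := fst Q - fst S) in *. set (v2 := snd Q - snd S) in *.
  replace (fst P - fst S) with (u1 + v1) by (unfold u1, v1; ring).
  replace (snd P - snd S) with (u2 + v2) by (unfold u2, v2; ring).
  set (a := edist P Q) in *. set (b := edist Q S) in *.
  assert (Hc : (u1*v1+u2*v2)^2 <= (a*b)^2).
  { replace ((a*b)^2) with ((a*a)*(b*b)) by ring. rewrite H1, H2.
    clearbody u1 u2 v1 v2. pose proof (pow2_ge_0 (u1*v2-u2*v1)). nra. }
  clearbody u1 u2 v1 v2 a b.
  assert (0 <= a*b) by nra.
  assert (u1*v1+u2*v2 <= a*b) by nra.
  replace ((a+b)*(a+b)) with (a*a + b*b + 2*(a*b)) by ring. rewrite H1, H2. nra.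
Qed.

Lemma edist_scale p1 p2 dx dy t :
  edist (p1 + t*dx, p2 + t*dy) (p1, p2) = Rabs t * sqrt (dx^2 + dy^2).
Proof.
  unfold edist; cbn [fst snd].
  replace ((p1 + t * dx - p1) ^ 2 + (p2 + t * dy - p2) ^ 2) with (Rsqr t * (dx^2+dy^2))
    by (unfold Rsqr; ring).
  rewrite sqrt_mult_alt by apply Rle_0_sqr. rewrite sqrt_Rsqr_abs. reflexivity.
Qed.
Lemma frac01 s1 s2 l : s1*s2 <= 0 -> s1 <> s2 -> l*(s1-s2) = s1 -> 0 <= l /\ 0 <= 1 - l.
Proof.
  intros H1 H2 H3.
  assert (Hd : 0 < (s1-s2)*(s1-s2)).
  { assert (s1 - s2 <> 0) by lra. pose proof (Rsqr_pos_lt _ H). unfold Rsqr in *; lra. }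
  assert (E1 : l*((s1-s2)*(s1-s2)) = s1*s1 - s1*s2) by (rewrite <- Rmult_assoc, H3; ring).
  assert (E2 : (1-l)*((s1-s2)*(s1-s2)) = s2*s2 - s1*s2)
    by (replace ((1-l)*((s1-s2)*(s1-s2))) with ((s1-s2)*(s1-s2) - l*(s1-s2)*(s1-s2)) by ring;
        rewrite H3; ring).
  pose proof (Rle_0_sqr s1). pose proof (Rle_0_sqr s2). unfold Rsqr in *.
  split; [destruct (Rle_lt_dec 0 l)|destruct (Rle_lt_dec 0 (1-l))]; try lra; nra.
Qed.
Lemma frac01' s1 s2 l : 0 < s1*s2 -> l*(s1+s2) = s1 -> 0 <= l /\ 0 <= 1 - l.
Proof.
  intros H1 H3.
  assert (E1 : l*((s1+s2)*(s1+s2)) = s1*s1 + s1*s2) by (rewrite <- Rmult_assoc, H3; ring).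
  assert (E2 : (1-l)*((s1+s2)*(s1+s2)) = s2*s2 + s1*s2)
    by (replace ((1-l)*((s1+s2)*(s1+s2))) with ((s1+s2)*(s1+s2) - l*(s1+s2)*(s1+s2)) by ring;
        rewrite H3; ring).
  pose proof (Rle_0_sqr s1). pose proof (Rle_0_sqr s2). pose proof (Rle_0_sqr (s1+s2)). unfold Rsqr in *.
  split; [destruct (Rle_lt_dec 0 l)|destruct (Rle_lt_dec 0 (1-l))]; try lra; nra.
Qed.

Lemma tangent_ge P Q F1 F2 a : tangent_line P Q F1 F2 a ->
  forall Y, on_line P Q Y -> 2*a <= edist Y F1 + edist Y F2.
Proof.
  intros [X [HX [HXe Hu]]] Y HY.
  destruct (Rle_lt_dec (2*a) (edist Y F1 + edist Y F2)) as [|Hlt]; [assumption|exfalso].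
  unfold on_ellipse in HXe.
  destruct X as [x1 x2]; destruct Y as [y1 y2].
  set (dx := y1 - x1). set (dy := y2 - x2).
  set (e := sqrt (dx^2+dy^2)).
  assert (Hne : (y1,y2) <> (x1,x2)) by (intro E; rewrite E in Hlt; lra).
  assert (He : 0 < e).
  { unfold e. apply sqrt_lt_R0.
    destruct (Req_dec dx 0) as [E1|E1]; [destruct (Req_dec dy 0) as [E2|E2]|].
    - exfalso; apply Hne. unfold dx, dy in *. f_equal; lra.
    - pose proof (pow2_ge_0 dx). pose proof (Rsqr_pos_lt dy E2); unfold Rsqr in *. nra.
    - pose proof (pow2_ge_0 dy). pose proof (Rsqr_pos_lt dx E1); unfold Rsqr in *. nra. }
  set (gY := edist (y1,y2) F1 + edist (y1,y2) F2) in *.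
  assert (HgY : 0 <= gY) by (unfold gY; pose proof (edist_nonneg (y1,y2) F1);
                            pose proof (edist_nonneg (y1,y2) F2); lra).
  set (pt := fun t => (y1 + t*dx, y2 + t*dy)).
  set (h := fun t => edist (pt t) F1 + edist (pt t) F2 - 2*a).
  assert (Hc : continuity h).
  { intro t. unfold h, pt, edist. cbn [fst snd].
    apply continuity_pt_minus; [apply continuity_pt_plus|reg].
    - apply continuity_pt_comp with (f2 := sqrt). reg. apply continuity_pt_sqrt. apply Rplus_le_le_0_compat; apply pow2_ge_0.
    - apply continuity_pt_comp with (f2 := sqrt). reg. apply continuity_pt_sqrt. apply Rplus_le_le_0_compat; apply pow2_ge_0. }
  set (T := (2*a + gY)/e + 1).
  assert (HT : 0 < T).
  { unfold T. assert (0 <= (2*a+gY)/e) by (unfold Rdiv; apply Rmult_le_pos; [lra| left; apply Rinv_0_lt_compat; lra]). lra. }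
  assert (HTe : T * e = 2*a + gY + e) by (unfold T; field; lra).
  assert (H0 : h 0 < 0).
  { unfold h, pt. replace (y1 + 0*dx) with y1 by ring. replace (y2 + 0*dy) with y2 by ring.
    fold gY. lra. }
  assert (HTp : 0 < h T).
  { unfold h. 
    assert (Ed : edist (pt T) (y1,y2) = T * e).
    { unfold pt. rewrite edist_scale. rewrite Rabs_pos_eq by lra. reflexivity. }
    pose proof (edist_tri (pt T) F1 (y1,y2)).
    pose proof (edist_tri (pt T) F2 (y1,y2)).
    rewrite (edist_sym F1 (y1,y2)) in *. rewrite (edist_sym F2 (y1,y2)) in *.
    unfold gY in *. lra. }
  destruct (IVT h 0 T Hc HT H0 HTp) as [z [Hz Hhz]].
  assert (Hon : on_line P Q (pt z)).
  { unfold on_line in *. unfold pt, dx, dy. cbn [fst snd] in *.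
    replace ((fst Q - fst P) * (y2 + z * (y2 - x2) - snd P) -
             (snd Q - snd P) * (y1 + z * (y1 - x1) - fst P))
      with ((1+z) * ((fst Q - fst P) * (y2 - snd P) - (snd Q - snd P) * (y1 - fst P))
            - z * ((fst Q - fst P) * (x2 - snd P) - (snd Q - snd P) * (x1 - fst P))) by ring.
    rewrite HX, HY. ring. }
  assert (Hel : on_ellipse F1 F2 a (pt z)) by (unfold on_ellipse; unfold h in Hhz; lra).
  pose proof (Hu _ Hon Hel) as Eq. unfold pt in Eq. injection Eq as E1 E2.
  apply Hne. unfold dx, dy in *. f_equal; nra.
Qed.

Lemma edist_xy a b c d : edist (a,b) (c,d) = sqrt ((a-c)^2+(b-d)^2).
Proof. reflexivity. Qed.

Lemma sqrt_sq_eq x y : x = y -> sqrt x = sqrt y.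
Proof. intros ->; reflexivity. Qed.

Lemma tangent_alg p1 p2 q1 q2 u1 u2 v1 v2 a :
  is_ellipse (u1,u2) (v1,v2) a -> tangent_line (p1,p2) (q1,q2) (u1,u2) (v1,v2) a ->
  0 < (-(q2-p2))^2 + (q1-p1)^2 ->
  4 * ((-(q2-p2))*(u1-p1) + (q1-p1)*(u2-p2)) * ((-(q2-p2))*(v1-p1) + (q1-p1)*(v2-p2))
  = (4*a^2 - ((u1-v1)^2+(u2-v2)^2)) * ((-(q2-p2))^2 + (q1-p1)^2).
Proof.
  intros Hell Htan Hmm.
  pose proof (tangent_ge _ _ _ _ _ Htan) as Hge.
  destruct Htan as [[x1 x2] [HX [HXe _]]].
  unfold on_ellipse, is_ellipse, on_line in *. cbn [fst snd] in *.
  set (m1 := -(q2-p2)) in *. set (m2 := q1-p1) in *.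
  set (mm := m1^2+m2^2) in *.
  set (s1 := m1*(u1-p1) + m2*(u2-p2)).
  set (s2 := m1*(v1-p1) + m2*(v2-p2)).
  assert (Hline : forall z1 z2, on_line (p1,p2) (q1,q2) (z1,z2) <-> m1*(z1-p1)+m2*(z2-p2) = 0).
  { intros z1 z2. unfold on_line; cbn [fst snd]. unfold m1, m2. split; intro H; rewrite <- H; ring. }
  assert (HX' : m1*(x1-p1)+m2*(x2-p2) = 0) by (rewrite <- HX; unfold m1, m2; ring).
  set (E := edist (u1,u2) (v1,v2)) in *.
  assert (HE : 0 <= E) by apply edist_nonneg.
  destruct (Rle_lt_dec (s1*s2) 0) as [Hs|Hs].
  - exfalso.
    destruct (Req_dec s1 s2) as [Heq|Hneq].
    + assert (Hs1 : s1 = 0) by (rewrite <- Heq in Hs; nra).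
      assert (Hon : on_line (p1,p2) (q1,q2) (u1,u2)) by (apply Hline; exact Hs1).
      pose proof (Hge _ Hon).
      assert (edist (u1,u2) (u1,u2) = 0).
      { rewrite edist_xy. replace ((u1-u1)^2+(u2-u2)^2) with 0 by ring. apply sqrt_0. }
      unfold E in *; lra.
    + set (l := s1/(s1-s2)).
      assert (Hl : l*(s1-s2) = s1) by (unfold l; field; lra).
      assert (Hl01 : 0 <= l /\ 0 <= 1 - l) by (apply (frac01 s1 s2); auto).
      set (z1 := u1 + l*(v1-u1)). set (z2 := u2 + l*(v2-u2)).
      assert (Hon : on_line (p1,p2) (q1,q2) (z1,z2)).
      { apply Hline. unfold z1, z2.
        replace (m1 * (u1 + l * (v1 - u1) - p1) + m2 * (u2 + l * (v2 - u2) - p2))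
          with (s1 - l*(s1-s2)) by (unfold s1, s2; ring). lra. }
      pose proof (Hge _ Hon) as Hg.
      assert (Ed1 : edist (z1,z2) (u1,u2) = l * E).
      { unfold z1, z2. rewrite edist_scale. rewrite Rabs_pos_eq by lra.
        unfold E. rewrite edist_xy. f_equal; try (apply sqrt_sq_eq; ring). }
      assert (Ed2 : edist (z1,z2) (v1,v2) = (1-l) * E).
      { replace (z1,z2) with (v1 + (1-l)*(u1-v1), v2 + (1-l)*(u2-v2))
          by (unfold z1, z2; f_equal; ring).
        rewrite edist_scale. rewrite Rabs_pos_eq by lra.
        unfold E. rewrite edist_xy. f_equal; try (apply sqrt_sq_eq; ring). }
      rewrite Ed1, Ed2 in Hg. lra.
  - set (k := s1/mm).
    assert (Hk : k*mm = s1) by (unfold k; field; lra).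
    set (w1 := u1 - 2*k*m1). set (w2 := u2 - 2*k*m2).
    assert (Hrefl : forall z1 z2, m1*(z1-p1)+m2*(z2-p2) = 0 ->
               edist (z1,z2) (w1,w2) = edist (z1,z2) (u1,u2)).
    { intros z1 z2 Hz. rewrite !edist_xy. apply sqrt_sq_eq. unfold w1, w2.
      transitivity ((z1-u1)^2+(z2-u2)^2 + 4*k*(m1*(z1-p1)+m2*(z2-p2)) - 4*k*s1 + 4*k*(k*mm)).
      - unfold s1, mm. ring.
      - rewrite Hz, Hk. ring. }
    set (l := s1/(s1+s2)).
    assert (Hs12 : s1 + s2 <> 0) by (intro; nra).
    assert (Hl : l*(s1+s2) = s1) by (unfold l; field; lra).
    assert (Hl01 : 0 <= l /\ 0 <= 1 - l) by (apply (frac01' s1 s2); auto).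
    set (z1 := w1 + l*(v1-w1)). set (z2 := w2 + l*(v2-w2)).
    assert (Hz : m1*(z1-p1)+m2*(z2-p2) = 0).
    { unfold z1, z2, w1, w2.
      transitivity (s1 - 2*(k*mm) + l*(s2 - s1 + 2*(k*mm))).
      - unfold s1, s2, mm. ring.
      - rewrite Hk. replace (s1 - 2 * s1 + l * (s2 - s1 + 2 * s1)) with (l*(s1+s2) - s1) by ring.
        lra. }
    assert (Hon : on_line (p1,p2) (q1,q2) (z1,z2)) by (apply Hline; exact Hz).
    pose proof (Hge _ Hon) as Hg.
    set (E' := edist (v1,v2) (w1,w2)).
    assert (Ed1 : edist (z1,z2) (w1,w2) = l * E').
    { unfold z1, z2. rewrite edist_scale. rewrite Rabs_pos_eq by lra.
      unfold E'. rewrite edist_xy. f_equal; try (apply sqrt_sq_eq; ring). }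
    assert (Ed2 : edist (z1,z2) (v1,v2) = (1-l) * E').
    { replace (z1,z2) with (v1 + (1-l)*(w1-v1), v2 + (1-l)*(w2-v2))
        by (unfold z1, z2; f_equal; ring).
      rewrite edist_scale. rewrite Rabs_pos_eq by lra.
      unfold E'. rewrite edist_xy. f_equal; try (apply sqrt_sq_eq; ring). }
    rewrite <- (Hrefl z1 z2 Hz) in Hg. rewrite Ed1, Ed2 in Hg.
    rewrite <- (Hrefl x1 x2 HX') in HXe.
    pose proof (edist_tri (w1,w2) (x1,x2) (v1,v2)) as Ht.
    rewrite (edist_sym (w1,w2) (x1,x2)) in Ht. rewrite (edist_sym (w1,w2) (v1,v2)) in Ht.
    fold E' in Ht.
    assert (HE' : E' = 2*a) by lra.
    assert (HE2 : E'*E' = 4*a^2) by (rewrite HE'; ring).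
    unfold E' in HE2. rewrite edist_sq in HE2. cbn [fst snd] in HE2.
    assert (HE3 : (v1 - w1)^2 + (v2 - w2)^2 = (u1-v1)^2+(u2-v2)^2 + 4*k*s2).
    { unfold w1, w2.
      transitivity ((u1-v1)^2+(u2-v2)^2 + 4*k*(s2 - s1) + 4*k*(k*mm)).
      - unfold s1, s2, mm. ring.
      - rewrite Hk. ring. }
    rewrite HE3 in HE2.
    assert (Hk2 : 4*k*s2*mm = 4*s1*s2) by (rewrite <- Hk; ring).
    assert (HH: 4*a^2*mm = ((u1-v1)^2+(u2-v2)^2)*mm + 4*s1*s2).
    { rewrite <- Hk2, <- HE2. ring. }
    lra.
Qed.

Definition NF (p1 p2 q1 q2 n1 n2 : R) := n1*(p1*q1 - p2*q2) + n2*(p1*q2 + p2*q1).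

Lemma lin x1 y1 x2 y2 f1 f2 r bb :
  x1^2+y1^2 = r -> x2^2+y2^2 = r -> 0 < (-(y2-y1))^2+(x2-x1)^2 ->
  ((-(y2-y1))*x1 + (x2-x1)*y1)^2 - ((-(y2-y1))*f1 + (x2-x1)*f2)^2
    = bb*((-(y2-y1))^2+(x2-x1)^2) ->
  NF x1 y1 x2 y2 (f1^2-f2^2) (2*f1*f2) - r*(x1*x2+y1*y2) = r*(r - (f1^2+f2^2) - 2*bb).
Proof.
  intros h1 h2 Hm Ht.
  assert (h1' : x1^2+y1^2-r = 0) by lra. assert (h2' : x2^2+y2^2-r = 0) by lra.
  set (mm := (-(y2-y1))^2+(x2-x1)^2) in *.
  set (X := r*(r+(x1*x2+y1*y2)) - r*(f1^2+f2^2) - NF x1 y1 x2 y2 (f1^2-f2^2) (2*f1*f2) - 2*r*bb).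
  assert (E : mm*X - 2*r*(((-(y2-y1))*x1 + (x2-x1)*y1)^2 - ((-(y2-y1))*f1 + (x2-x1)*f2)^2 - bb*mm)
              = (1*r^2 + 1*f2^2*r + (-1)*f1^2*r + (-2)*y2^2*r + 4*x2*y2*f1*f2 + (-2)*x2^2*r + (-2)*x2^2*f2^2 + 2*x2^2*f1^2 + 1*y1*y2*r + (-1)*y1*y2*f2^2 + 1*y1*y2*f1^2 + (-2)*y1*x2*f1*f2 + (-2)*x1*y2*f1*f2 + 1*x1*x2*r + 1*x1*x2*f2^2 + (-1)*x1*x2*f1^2)*(x1^2+y1^2-r) + ((-1)*r^2 + (-1)*f2^2*r + 1*f1^2*r + 1*y1*y2*r + (-1)*y1*y2*f2^2 + 1*y1*y2*f1^2 + (-2)*y1*x2*f1*f2 + 2*y1^2*f2^2 + (-2)*y1^2*f1^2 + (-2)*x1*y2*f1*f2 + 1*x1*x2*r + 1*x1*x2*f2^2 + (-1)*x1*x2*f1^2 + 4*x1*y1*f1*f2)*(x2^2+y2^2-r) ).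
  { unfold mm, X, NF. ring. }
  rewrite h1', h2' in E.
  assert (E2 : mm * X = 0).
  { assert (E3 : mm * X = 2*r*(((-(y2-y1))*x1 + (x2-x1)*y1)^2 - ((-(y2-y1))*f1 + (x2-x1)*f2)^2 - bb*mm)) by (rewrite <- (Rplus_0_r (2*r*_)); rewrite <- Rminus_0_r; lra).
    rewrite E3, Ht. ring. }
  assert (X = 0).
  { apply Rmult_eq_reg_l with mm; [|lra]. rewrite E2. ring. }
  unfold X in H. lra.
Qed.

Lemma core x1 y1 x2 y2 x3 y3 f1 f2 r K :
  x1^2+y1^2 = r -> x2^2+y2^2 = r -> x3^2+y3^2 = r ->
  (x2-x1)*(y3-y1)-(y2-y1)*(x3-x1) <> 0 ->
  NF x1 y1 x2 y2 (f1^2-f2^2) (2*f1*f2) - r*(x1*x2+y1*y2) = K ->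
  NF x1 y1 x3 y3 (f1^2-f2^2) (2*f1*f2) - r*(x1*x3+y1*y3) = K ->
  NF x2 y2 x3 y3 (f1^2-f2^2) (2*f1*f2) - r*(x2*x3+y2*y3) = K ->
  (f1^2+f2^2)^2 = r*((x1+x2+x3)^2+(y1+y2+y3)^2).
Proof.
  intros h1 h2 h3 Hdet TAB TAC TBC.
  assert (h1' : x1^2+y1^2-r = 0) by lra. assert (h2' : x2^2+y2^2-r = 0) by lra.
  assert (h3' : x3^2+y3^2-r = 0) by lra.
  set (n1s := -((x1*x2-y1*y2)+(x1*x3-y1*y3)+(x2*x3-y2*y3))).
  set (n2s := -((x1*y2+x2*y1)+(x1*y3+x3*y1)+(x2*y3+x3*y2))).
  set (s := (x1*x2+y1*y2)+(x1*x3+y1*y3)+(x2*x3+y2*y3)).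
  assert (SAB : NF x1 y1 x2 y2 n1s n2s - r*(x1*x2+y1*y2) + r*r + r*s = ((-1)*y2*y3 + (-1)*y2^2 + (-1)*x2*x3 + (-1)*x2^2)*(x1^2+y1^2-r) + ((-1)*r + (-1)*y1*y3 + (-1)*x1*x3)*(x2^2+y2^2-r) + (0)*(x3^2+y3^2-r))
    by (unfold NF, n1s, n2s, s; ring).
  assert (SAC : NF x1 y1 x3 y3 n1s n2s - r*(x1*x3+y1*y3) + r*r + r*s = ((-1)*y3^2 + (-1)*x3^2 + (-1)*y2*y3 + (-1)*x2*x3)*(x1^2+y1^2-r) + (0)*(x2^2+y2^2-r) + ((-1)*r + (-1)*y1*y2 + (-1)*x1*x2)*(x3^2+y3^2-r))
    by (unfold NF, n1s, n2s, s; ring).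
  assert (SBC : NF x2 y2 x3 y3 n1s n2s - r*(x2*x3+y2*y3) + r*r + r*s = (0)*(x1^2+y1^2-r) + ((-1)*y3^2 + (-1)*x3^2 + (-1)*y1*y3 + (-1)*x1*x3)*(x2^2+y2^2-r) + ((-1)*r + (-1)*y1*y2 + (-1)*x1*x2)*(x3^2+y3^2-r))
    by (unfold NF, n1s, n2s, s; ring).
  rewrite h1', h2', h3' in SAB, SAC, SBC.
  set (d1 := f1^2-f2^2 - n1s). set (d2 := 2*f1*f2 - n2s).
  assert (e1 : (x1*(x2-x3) - y1*(y2-y3))*d1 + (x1*(y2-y3) + y1*(x2-x3))*d2 = 0).
  { transitivity ((NF x1 y1 x2 y2 (f1^2-f2^2) (2*f1*f2) - r*(x1*x2+y1*y2))
                 - (NF x1 y1 x3 y3 (f1^2-f2^2) (2*f1*f2) - r*(x1*x3+y1*y3))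
                 - (NF x1 y1 x2 y2 n1s n2s - r*(x1*x2+y1*y2) + r*r + r*s)
                 + (NF x1 y1 x3 y3 n1s n2s - r*(x1*x3+y1*y3) + r*r + r*s)).
    - unfold d1, d2, NF. ring.
    - rewrite TAB, TAC, SAB, SAC. ring. }
  assert (e2 : (x2*(x1-x3) - y2*(y1-y3))*d1 + (x2*(y1-y3) + y2*(x1-x3))*d2 = 0).
  { transitivity ((NF x1 y1 x2 y2 (f1^2-f2^2) (2*f1*f2) - r*(x1*x2+y1*y2))
                 - (NF x2 y2 x3 y3 (f1^2-f2^2) (2*f1*f2) - r*(x2*x3+y2*y3))
                 - (NF x1 y1 x2 y2 n1s n2s - r*(x1*x2+y1*y2) + r*r + r*s)
                 + (NF x2 y2 x3 y3 n1s n2s - r*(x2*x3+y2*y3) + r*r + r*s)).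
    - unfold d1, d2, NF. ring.
    - rewrite TAB, TBC, SAB, SBC. ring. }
  assert (HD : (x1*(x2-x3) - y1*(y2-y3))*(x2*(y1-y3) + y2*(x1-x3))
               - (x1*(y2-y3) + y1*(x2-x3))*(x2*(x1-x3) - y2*(y1-y3))
               - r*((x2-x1)*(y3-y1)-(y2-y1)*(x3-x1)) = ((-1)*y2*x3 + 1*x2*y3)*(x1^2+y1^2-r) + (1*y1*x3 + (-1)*x1*y3)*(x2^2+y2^2-r) + ((-1)*y1*x2 + 1*x1*y2)*(x3^2+y3^2-r)) by ring.
  rewrite h1', h2', h3' in HD.
  assert (Hr : r <> 0).
  { intro Hr0. rewrite Hr0 in h1, h2, h3.
    assert (x1 = 0) by nra. assert (y1 = 0) by nra. assert (x2 = 0) by nra.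
    assert (y2 = 0) by nra. assert (x3 = 0) by nra. assert (y3 = 0) by nra.
    apply Hdet. subst. ring. }
  set (Dl := (x1*(x2-x3) - y1*(y2-y3))*(x2*(y1-y3) + y2*(x1-x3))
               - (x1*(y2-y3) + y1*(x2-x3))*(x2*(x1-x3) - y2*(y1-y3))) in HD.
  assert (HDl : Dl <> 0).
  { assert (Dl = r*((x2-x1)*(y3-y1)-(y2-y1)*(x3-x1))) by lra.
    rewrite H. apply Rmult_integral_contrapositive; auto. }
  assert (Hd1 : d1 * Dl = 0).
  { unfold Dl. transitivity ((x2*(y1-y3) + y2*(x1-x3))*((x1*(x2-x3) - y1*(y2-y3))*d1 + (x1*(y2-y3) + y1*(x2-x3))*d2)
       - (x1*(y2-y3) + y1*(x2-x3))*((x2*(x1-x3) - y2*(y1-y3))*d1 + (x2*(y1-y3) + y2*(x1-x3))*d2)).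
    - ring.
    - rewrite e1, e2. ring. }
  assert (Hd2 : d2 * Dl = 0).
  { unfold Dl. transitivity (-(x2*(x1-x3) - y2*(y1-y3))*((x1*(x2-x3) - y1*(y2-y3))*d1 + (x1*(y2-y3) + y1*(x2-x3))*d2)
       + (x1*(x2-x3) - y1*(y2-y3))*((x2*(x1-x3) - y2*(y1-y3))*d1 + (x2*(y1-y3) + y2*(x1-x3))*d2)).
    - ring.
    - rewrite e1, e2. ring. }
  assert (D1 : d1 = 0).
  { destruct (Rmult_integral _ _ Hd1); [assumption|contradiction]. }
  assert (D2 : d2 = 0).
  { destruct (Rmult_integral _ _ Hd2); [assumption|contradiction]. }
  assert (N4 : n1s*n1s + n2s*n2s - r*((x1+x2+x3)^2+(y1+y2+y3)^2) = ((-1)*r + 1*y3^2 + 1*x3^2 + 2*y2*y3 + 1*y2^2 + 2*x2*x3 + 1*x2^2)*(x1^2+y1^2-r) + (1*y3^2 + 1*x3^2 + 2*y1*y3 + 2*x1*x3)*(x2^2+y2^2-r) + (1*r + 2*y1*y2 + 2*x1*x2)*(x3^2+y3^2-r))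
    by (unfold n1s, n2s; ring).
  rewrite h1', h2', h3' in N4.
  assert (F1 : f1^2-f2^2 = n1s) by (unfold d1 in D1; lra).
  assert (F2 : 2*f1*f2 = n2s) by (unfold d2 in D2; lra).
  transitivity ((f1^2-f2^2)*(f1^2-f2^2) + (2*f1*f2)*(2*f1*f2)); [ring|].
  rewrite F1, F2. lra.
Qed.

Lemma prod_id x1 y1 x2 y2 x3 y3 r :
  x1^2+y1^2 = r -> x2^2+y2^2 = r -> x3^2+y3^2 = r ->
  2 * (((x2-x1)*(x3-x1)+(y2-y1)*(y3-y1)) * ((x3-x2)*(x1-x2)+(y3-y2)*(y1-y2))
       * ((x1-x3)*(x2-x3)+(y1-y3)*(y2-y3)))
  = ((x2-x1)*(y3-y1)-(y2-y1)*(x3-x1))^2 * (r - ((x1+x2+x3)^2+(y1+y2+y3)^2)).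
Proof.
  intros h1 h2 h3.
  assert (h1' : x1^2+y1^2-r = 0) by lra. assert (h2' : x2^2+y2^2-r = 0) by lra.
  assert (h3' : x3^2+y3^2-r = 0) by lra.
  assert (E : 2 * (((x2-x1)*(x3-x1)+(y2-y1)*(y3-y1)) * ((x3-x2)*(x1-x2)+(y3-y2)*(y1-y2))
       * ((x1-x3)*(x2-x3)+(y1-y3)*(y2-y3)))
  - ((x2-x1)*(y3-y1)-(y2-y1)*(x3-x1))^2 * (r - ((x1+x2+x3)^2+(y1+y2+y3)^2)) = (1*y3^4 + (-2)*x3^2*r + (-1)*x3^2*y3^2 + (-2)*x3^4 + (-2)*y2*y3^3 + (-2)*y2*x3^2*y3 + 2*y2^2*y3^2 + 2*y2^2*x3^2 + (-2)*y2^3*y3 + 1*y2^4 + 4*x2*x3*r + (-4)*x2*x3*y3^2 + (-4)*x2*x3^3 + 10*x2*y2*x3*y3 + (-4)*x2*y2^2*x3 + (-2)*x2^2*r + 2*x2^2*y3^2 + 12*x2^2*x3^2 + (-2)*x2^2*y2*y3 + (-1)*x2^2*y2^2 + (-4)*x2^3*x3 + (-2)*x2^4 + 4*y1*y3^3 + 4*y1*x3^2*y3 + (-4)*y1*y2*y3^2 + (-2)*y1*y2*x3^2 + (-4)*y1*y2^2*y3 + 4*y1*y2^3 + (-2)*y1*x2*x3*y3 + (-2)*y1*x2*y2*x3 + (-2)*y1*x2^2*y3 + 4*y1*x2^2*y2 + (-2)*y1^2*y3^2 + 1*y1^2*x3^2 + 4*y1^2*y2*y3 + (-2)*y1^2*y2^2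 + (-2)*y1^2*x2*x3 + 1*y1^2*x2^2 + 4*x1*x3*y3^2 + 4*x1*x3^3 + (-2)*x1*y2*x3*y3 + (-2)*x1*y2^2*x3 + (-2)*x1*x2*y3^2 + (-4)*x1*x2*x3^2 + (-2)*x1*x2*y2*y3 + 4*x1*x2*y2^2 + (-4)*x1*x2^2*x3 + 4*x1*x2^3 + (-6)*x1*y1*x3*y3 + 6*x1*y1*y2*x3 + 6*x1*y1*x2*y3 + (-6)*x1*y1*x2*y2 + 1*x1^2*y3^2 + (-2)*x1^2*x3^2 + (-2)*x1^2*y2*y3 + 1*x1^2*y2^2 + 4*x1^2*x2*x3 + (-2)*x1^2*x2^2)*(x1^2+y1^2-r) + ((-4)*r^2 + 2*y3^2*r + 1*y3^4 + 10*x3^2*r + (-1)*x3^2*y3^2 + (-2)*x3^4 + (-2)*y2*y3*r + 4*y2*y3^3 + 4*y2*x3^2*y3 + 1*y2^2*r + (-2)*y2^2*y3^2 + 1*y2^2*x3^2 + (-4)*x2*x3*r + 4*x2*x3*y3^2 + 4*x2*x3^3 + (-6)*x2*y2*x3*y3 + (-2)*x2^2*r + 1*x2^2*y3^2 + (-2)*x2^2*x3^2 + (-2)*y1*y3*r + (-2)*y1*y3^3 + (-2)*y1*x3^2*y3 + 4*y1*y2*r + (-4)*y1*y2*y3^2 + (-2)*y1*y2*x3^2 + 4*y1*y2^2*y3 + (-2)*y1*x2*x3*y3 + 6*y1*x2*y2*x3 + (-2)*y1*x2^2*y3 + 5*y1^2*r + (-10)*y1^2*x3^2 + (-2)*y1^2*y2*y3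 + (-3)*y1^2*y2^2 + 2*y1^2*x2*x3 + 3*y1^2*x2^2 + (-4)*x1*x3*y3^2 + (-4)*x1*x3^3 + (-2)*x1*y2*x3*y3 + (-2)*x1*y2^2*x3 + 4*x1*x2*r + (-2)*x1*x2*y3^2 + (-4)*x1*x2*x3^2 + 6*x1*x2*y2*y3 + 4*x1*x2^2*x3 + 10*x1*y1*x3*y3 + (-2)*x1*y1*y2*x3 + (-2)*x1*y1*x2*y3 + (-6)*x1*y1*x2*y2)*(x2^2+y2^2-r) + (4*r^2 + 2*y3^2*r + (-4)*x3^2*r + 2*y2*y3*r + (-5)*y2^2*r + (-3)*y2^2*y3^2 + 3*y2^2*x3^2 + (-6)*x2*y2*x3*y3 + 2*y1*y3*r + (-4)*y1*y2*r + 4*y1*y2*y3^2 + (-2)*y1*y2*x3^2 + (-2)*y1*y2^2*y3 + 6*y1*x2*x3*y3 + (-2)*y1*x2*y2*x3 + (-5)*y1^2*r + (-3)*y1^2*y3^2 + 3*y1^2*x3^2 + (-2)*y1^2*y2*y3 + 10*y1^2*y2^2 + 2*y1^2*x2*x3 + 6*x1*y2*x3*y3 + 2*x1*y2^2*x3 + (-4)*x1*x2*r + (-2)*x1*x2*y3^2 + 4*x1*x2*x3^2 + (-2)*x1*x2*y2*y3 + (-6)*x1*y1*x3*y3 + (-2)*x1*y1*y2*x3 + (-2)*x1*y1*x2*y3 + 10*x1*y1*x2*y2)*(x3^2+y3^2-r)) by ring.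
  rewrite h1', h2', h3' in E. lra.
Qed.

Lemma pos_of_det x1 y1 x2 y2 x3 y3 :
  (x2-x1)*(y3-y1)-(y2-y1)*(x3-x1) <> 0 ->
  0 < (-(y2-y1))^2+(x2-x1)^2 /\ 0 < (-(y3-y2))^2+(x3-x2)^2 /\ 0 < (-(y1-y3))^2+(x1-x3)^2.
Proof.
  intros Hd.
  assert (G : forall p q, (p <> 0 \/ q <> 0) -> 0 < (-q)^2 + p^2).
  { intros p q [Hp|Hq].
    - pose proof (Rsqr_pos_lt p Hp). pose proof (pow2_ge_0 (-q)). unfold Rsqr in *. nra.
    - assert (-q <> 0) by lra. pose proof (Rsqr_pos_lt (-q) H). pose proof (pow2_ge_0 p). unfold Rsqr in *. nra. }
  split; [|split]; apply G.
  - destruct (Req_dec (x2-x1) 0); [destruct (Req_dec (y2-y1) 0)|]; auto.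
    exfalso; apply Hd. assert (x2 = x1) by lra. assert (y2 = y1) by lra. subst. ring.
  - destruct (Req_dec (x3-x2) 0); [destruct (Req_dec (y3-y2) 0)|]; auto.
    exfalso; apply Hd. assert (x3 = x2) by lra. assert (y3 = y2) by lra. subst. ring.
  - destruct (Req_dec (x1-x3) 0); [destruct (Req_dec (y1-y3) 0)|]; auto.
    exfalso; apply Hd. assert (x1 = x3) by lra. assert (y1 = y3) by lra. subst. ring.
Qed.

Lemma main_rel x1 y1 x2 y2 x3 y3 f1 f2 r bb :
  x1^2+y1^2 = r -> x2^2+y2^2 = r -> x3^2+y3^2 = r ->
  (x2-x1)*(y3-y1)-(y2-y1)*(x3-x1) <> 0 ->
  ((-(y2-y1))*x1 + (x2-x1)*y1)^2 - ((-(y2-y1))*f1 + (x2-x1)*f2)^2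
    = bb*((-(y2-y1))^2+(x2-x1)^2) ->
  ((-(y3-y2))*x2 + (x3-x2)*y2)^2 - ((-(y3-y2))*f1 + (x3-x2)*f2)^2
    = bb*((-(y3-y2))^2+(x3-x2)^2) ->
  ((-(y1-y3))*x3 + (x1-x3)*y3)^2 - ((-(y1-y3))*f1 + (x1-x3)*f2)^2
    = bb*((-(y1-y3))^2+(x1-x3)^2) ->
  (f1^2+f2^2)^2 = r*((x1+x2+x3)^2+(y1+y2+y3)^2).
Proof.
  intros h1 h2 h3 Hd T12 T23 T31.
  destruct (pos_of_det _ _ _ _ _ _ Hd) as [P12 [P23 P31]].
  pose proof (lin _ _ _ _ _ _ _ _ h1 h2 P12 T12) as L12.
  pose proof (lin _ _ _ _ _ _ _ _ h2 h3 P23 T23) as L23.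
  pose proof (lin _ _ _ _ _ _ _ _ h3 h1 P31 T31) as L31.
  apply (core _ _ _ _ _ _ _ _ _ (r * (r - (f1 ^ 2 + f2 ^ 2) - 2 * bb)) h1 h2 h3 Hd); auto.
  rewrite <- L31. unfold NF. ring.
Qed.

Lemma signs p q s : 0 < p + q -> 0 < q + s -> 0 < s + p ->
  ((0 < p /\ 0 < q /\ 0 < s) <-> 0 < p*q*s) /\ ((p < 0 \/ q < 0 \/ s < 0) <-> p*q*s < 0).
Proof.
  intros H1 H2 H3.
  destruct (Rtotal_order p 0) as [Hp|[Hp|Hp]];
  destruct (Rtotal_order q 0) as [Hq|[Hq|Hq]];
  destruct (Rtotal_order s 0) as [Hs|[Hs|Hs]];
  try (exfalso; lra); try subst;
  repeat split; intros; try lra;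
  try (assert (0 < p*q) by nra); try (assert (p*q < 0) by nra);
  try (assert (0 < q*s) by nra); try (assert (q*s < 0) by nra);
  try rewrite ?Rmult_0_l, ?Rmult_0_r in *; try lra; nra.
Qed.
Lemma cmp r cc HH : 0 < r -> 0 <= cc -> 0 <= HH -> cc^2 = r*HH ->
  ((0 < r - HH <-> cc < r) /\ (r - HH < 0 <-> r < cc)).
Proof.
  intros Hr Hc HH0 E.
  split; split; intro H.
  - destruct (Rlt_le_dec cc r); auto. exfalso.
    assert (r*r <= cc*cc) by nra. assert (r*HH < r*r) by nra. nra.
  - assert (r*r > cc*cc) by nra. assert (r*HH < r*r) by nra. nra.
  - destruct (Rlt_le_dec r cc); auto. exfalso.
    assert (cc*cc <= r*r) by nra. assert (r*r < r*HH) by nra. nra.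
  - assert (r*r < cc*cc) by nra. assert (r*r < r*HH) by nra. nra.
Qed.

Lemma sq0 x y : x^2+y^2 = 0 -> x = 0 /\ y = 0.
Proof. intros H. pose proof (pow2_ge_0 x). pose proof (pow2_ge_0 y). split; nra. Qed.

Lemma sgn_eq X d Y : 2*X = d*Y -> 0 < d -> (0 < X <-> 0 < Y) /\ (X < 0 <-> Y < 0).
Proof.
  intros E Hd. split; split; intro H.
  - destruct (Rlt_le_dec 0 Y); auto. nra.
  - nra.
  - destruct (Rlt_le_dec Y 0); auto. nra.
  - nra.
Qed.

Lemma sum_sq_nonneg x y : 0 <= x^2+y^2.
Proof. apply Rplus_le_le_0_compat; apply pow2_ge_0. Qed.

Theorem corollary2p1 (A B C O F1 F2 : point) (a : R) :
  noncollinear A B C ->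
  is_circumcenter A B C O ->
  is_ellipse F1 F2 a ->
  center F1 F2 = O ->
  circumscribed_about A B C F1 F2 a ->
  (acute_triangle A B C <-> edist O A > linear_eccentricity F1 F2) /\
  (obtuse_triangle A B C <-> edist O A < linear_eccentricity F1 F2).
Proof.
  destruct A as [a1 a2], B as [b1 b2], C as [c1 c2], F1 as [u1 u2], F2 as [v1 v2].
  intros Hnc Hcc Hell Hcen [TAB [TBC TCA]]. subst O.
  unfold noncollinear, is_circumcenter, center, acute_triangle, obtuse_triangle,
    dotv, linear_eccentricity in *.
  cbn [fst snd] in *.
  rewrite !edist_xy in Hcc. rewrite !edist_xy.
  destruct (pos_of_det _ _ _ _ _ _ Hnc) as [P12 [P23 P31]].
  pose proof (tangent_alg _ _ _ _ _ _ _ _ _ Hell TAB P12) as E12.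
  pose proof (tangent_alg _ _ _ _ _ _ _ _ _ Hell TBC P23) as E23.
  pose proof (tangent_alg _ _ _ _ _ _ _ _ _ Hell TCA P31) as E31.
  set (o1 := (u1+v1)/2) in *. set (o2 := (u2+v2)/2) in *.
  set (f1 := (u1-v1)/2). set (f2 := (u2-v2)/2).
  set (x1 := a1 - o1). set (y1 := a2 - o2).
  set (x2 := b1 - o1). set (y2 := b2 - o2).
  set (x3 := c1 - o1). set (y3 := c2 - o2).
  set (r := x1^2+y1^2).
  set (bb := a^2 - (f1^2+f2^2)).
  destruct Hcc as [Hc1 Hc2].
  assert (Hs : forall p q, 0 <= p -> 0 <= q -> sqrt p = sqrt q -> p = q).
  { intros p q Hp Hq Hpq. rewrite <- (sqrt_sqrt p Hp), <- (sqrt_sqrt q Hq), Hpq. reflexivity. }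
  assert (h1 : x1^2+y1^2 = r) by reflexivity.
  assert (h2 : x2^2+y2^2 = r).
  { apply Hs in Hc1; try (apply Rplus_le_le_0_compat; apply pow2_ge_0).
    unfold x1, y1, x2, y2, r.
    transitivity ((o1 - b1) ^ 2 + (o2 - b2) ^ 2); [ring|]. rewrite <- Hc1. unfold x1, y1. ring. }
  assert (h3 : x3^2+y3^2 = r).
  { apply Hs in Hc2; try (apply Rplus_le_le_0_compat; apply pow2_ge_0).
    rewrite <- h2. unfold x3, y3, x2, y2.
    transitivity ((o1 - c1) ^ 2 + (o2 - c2) ^ 2); [ring|]. rewrite <- Hc2. ring. }
  assert (Hd : (x2-x1)*(y3-y1)-(y2-y1)*(x3-x1) <> 0).
  { unfold x1, x2, x3, y1, y2, y3. replace ((b1 - o1 - (a1 - o1)) * (c2 - o2 - (a2 - o2)) -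
      (b2 - o2 - (a2 - o2)) * (c1 - o1 - (a1 - o1))) with
      ((b1 - a1) * (c2 - a2) - (b2 - a2) * (c1 - a1)) by ring. exact Hnc. }
  assert (T12 : ((-(y2-y1))*x1 + (x2-x1)*y1)^2 - ((-(y2-y1))*f1 + (x2-x1)*f2)^2
    = bb*((-(y2-y1))^2+(x2-x1)^2)).
  { apply Rmult_eq_reg_l with 4; [|lra].
    unfold bb, x1, x2, y1, y2, f1, f2, o1, o2. 
    match type of E12 with ?L = ?R => transitivity L; [|rewrite E12] end; field. }
  assert (T23 : ((-(y3-y2))*x2 + (x3-x2)*y2)^2 - ((-(y3-y2))*f1 + (x3-x2)*f2)^2
    = bb*((-(y3-y2))^2+(x3-x2)^2)).
  { apply Rmult_eq_reg_l with 4; [|lra].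
    unfold bb, x3, x2, y3, y2, f1, f2, o1, o2. 
    match type of E23 with ?L = ?R => transitivity L; [|rewrite E23] end; field. }
  assert (T31 : ((-(y1-y3))*x3 + (x1-x3)*y3)^2 - ((-(y1-y3))*f1 + (x1-x3)*f2)^2
    = bb*((-(y1-y3))^2+(x1-x3)^2)).
  { apply Rmult_eq_reg_l with 4; [|lra].
    unfold bb, x3, x1, y3, y1, f1, f2, o1, o2. 
    match type of E31 with ?L = ?R => transitivity L; [|rewrite E31] end; field. }
  pose proof (main_rel _ _ _ _ _ _ _ _ _ _ h1 h2 h3 Hd T12 T23 T31) as Key.
  pose proof (prod_id _ _ _ _ _ _ _ h1 h2 h3) as Prod.
  set (cc := f1^2+f2^2) in *.
  set (HH := (x1+x2+x3)^2+(y1+y2+y3)^2) in *.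
  assert (Hr : 0 < r).
  { assert (0 <= r) by (unfold r; apply sum_sq_nonneg).
    destruct (Req_dec r 0) as [Hr0|]; [|lra]. exfalso.
    rewrite Hr0 in h1, h2, h3.
    destruct (sq0 _ _ h1) as [H0 H1]. destruct (sq0 _ _ h2) as [H2 H3].
    destruct (sq0 _ _ h3) as [H4 H5].
    apply Hd. rewrite H0, H1, H2, H3, H4, H5. ring. }
  assert (Hcc : 0 <= cc) by (unfold cc; apply sum_sq_nonneg).
  assert (HH0 : 0 <= HH) by (unfold HH; apply sum_sq_nonneg).
  destruct (cmp r cc HH Hr Hcc HH0 Key) as [C1 C2].
  assert (SR : sqrt ((o1 - a1) ^ 2 + (o2 - a2) ^ 2) = sqrt r).
  { apply sqrt_sq_eq. unfold r, x1, y1. ring. }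
  assert (SC : sqrt ((u1 - v1) ^ 2 + (u2 - v2) ^ 2) / 2 = sqrt cc).
  { replace ((u1 - v1) ^ 2 + (u2 - v2) ^ 2) with (4 * cc) by (unfold cc, f1, f2; field).
    rewrite sqrt_mult_alt by lra.
    replace 4 with (2*2) by ring. rewrite sqrt_square by lra. field. }
  rewrite SR, SC.
  set (pA := (b1 - a1) * (c1 - a1) + (b2 - a2) * (c2 - a2)).
  set (pB := (c1 - b1) * (a1 - b1) + (c2 - b2) * (a2 - b2)).
  set (pC := (a1 - c1) * (b1 - c1) + (a2 - c2) * (b2 - c2)).
  assert (S1 : 0 < pA + pB) by (unfold pA, pB; replace ((b1 - a1) * (c1 - a1) + (b2 - a2) * (c2 - a2) + ((c1 - b1) * (a1 - b1) + (c2 - b2) * (a2 - b2))) with ((- (b2 - a2)) ^ 2 + (b1 - a1) ^ 2) by ring; exact P12).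
  assert (S2 : 0 < pB + pC) by (unfold pB, pC; replace ((c1 - b1) * (a1 - b1) + (c2 - b2) * (a2 - b2) + ((a1 - c1) * (b1 - c1) + (a2 - c2) * (b2 - c2))) with ((- (c2 - b2)) ^ 2 + (c1 - b1) ^ 2) by ring; exact P23).
  assert (S3 : 0 < pC + pA) by (unfold pA, pC; replace ((a1 - c1) * (b1 - c1) + (a2 - c2) * (b2 - c2) + ((b1 - a1) * (c1 - a1) + (b2 - a2) * (c2 - a2))) with ((- (a2 - c2)) ^ 2 + (a1 - c1) ^ 2) by ring; exact P31).
  destruct (signs pA pB pC S1 S2 S3) as [G1 G2].
  set (dt := (x2-x1)*(y3-y1)-(y2-y1)*(x3-x1)) in *.
  assert (Pr : 2 * (pA*pB*pC) = dt^2 * (r - HH)).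
  { rewrite <- Prod. unfold pA, pB, pC, x1, x2, x3, y1, y2, y3. ring. }
  assert (Hdt : 0 < dt^2).
  { pose proof (Rsqr_pos_lt dt Hd) as Hq. unfold Rsqr in Hq. simpl. lra. }
  destruct (sgn_eq _ _ _ Pr Hdt) as [Q1 Q2].
  assert (Q3 : cc < r <-> sqrt r > sqrt cc).
  { split; intro. - apply sqrt_lt_1; lra. - apply sqrt_lt_0_alt; lra. }
  assert (Q4 : r < cc <-> sqrt r < sqrt cc).
  { split; intro. - apply sqrt_lt_1; lra. - apply sqrt_lt_0_alt; lra. }
  split.
  - rewrite G1, Q1, C1, Q3. tauto.
  - rewrite G2, Q2, C2, Q4. tauto.
Qed.
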